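(* Let $\tau>0$ and $\mathbf A\in\mathcal S_{++}^n$. A pair $(\mathbf W_\ast,\mathbf M_\ast)$ lies in $\mathcal E$ if and only if $\mathbf W_\ast=\mathbf U\mathbf S\mathbf V^\top$ and $\mathbf M_\ast=\mathbf U\mathbf S\mathbf U^\top$, where: - $\mathbf U$ is a $k\times k$ orthogonal matrix; - $\mathbf V$ is an $n\times k$ matrix whose columns are orthonormal eigenvectors of $\mathbf A$; - $\mathbf S$ is the $k\times k$ diagonal matrix whose $i$-th diagonal entry is the eigenvalue of $\mathbf A$ for the $i$-th column of $\mathbf V$.
   Context: Let $n>k\ge 1$ be integers. Let $\mathbf A$ be an $n\times n$ symmetric positive definite matrix; write $\mathbf A\in\mathcal S_{++}^n$. Here $\mathcal S_{++}^m$ denotes the $m\times m$ symmetric positive definite matrices, and $\mathcal D:=\mathbb R^{k\times n}\times\mathcal S_{++}^k$. For a parameter $\tau>0$, consider the ODE $(\ast)$ on $\mathcal D$: $$\tfrac12\tfrac{d\mathbf W}{dt}=\mathbf M^{-1}\mathbf W\mathbf A-\mathbf W,\qquad \tau\tfrac{d\mathbf M}{dt}=\mathbf M^{-1}\mathbf W\mathbf A\mathbf W^\top\mathbf M^{-1}-\mathbf M.$$ $\mathcal E$ is the set of equilibria of $(\ast)$, i.e. the set of $(\mathbf W,\mathbf M)\in\mathcal D$ with $\mathbf M^{-1}\mathbf W\mathbf A=\mathbf W$ and $\mathbf M^{-1}\mathbf W\mathbf A\mathbf W^\top\mathbf M^{-1}=\mathbf M$. *)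

(* Defs.v *)
From HB Require Import structures.
From mathcomp Require Import all_boot all_order all_algebra.
From mathcomp Require Import reals.
Set Implicit Arguments. Unset Strict Implicit. Unset Printing Implicit Defensive.
Import Order.TTheory GRing.Theory Num.Theory.
Local Open Scope ring_scope.

Definition spd_mx (R : realType) (m : nat) (A : 'M[R]_m) : Prop :=
  A^T = A /\ (forall x : 'cV[R]_m, x != 0 -> 0 < (x^T *m A *m x) 0 0).

Definition orthogonal_mx (R : realType) (k : nat) (U : 'M[R]_k) : Prop :=
  U^T *m U = 1%:M /\ U *m U^T = 1%:M.

Definition in_D (R : realType) (k n : nat) (W : 'M[R]_(k, n)) (M : 'M[R]_k) : Prop :=
  spd_mx M.

(* the set E of equilibria of the ODE (star) *)
Definition in_E (R : realType) (k n : nat) (A : 'M[R]_n)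
    (W : 'M[R]_(k, n)) (M : 'M[R]_k) : Prop :=
  in_D W M /\
  invmx M *m W *m A = W /\
  invmx M *m W *m A *m W^T *m invmx M = M.

(* Main.v *)
Require Import Defs.
From HB Require Import structures.
From mathcomp Require Import all_boot all_order all_algebra.
From mathcomp Require Import reals.
From mathcomp Require Import ring lra.
From mathcomp Require Import complex spectral.
Set Implicit Arguments. Unset Strict Implicit. Unset Printing Implicit Defensive.
Import Order.TTheory GRing.Theory Num.Theory.
Local Open Scope ring_scope.

Lemma rv_norm (R : realType) n (u : 'rV[R]_n) :
  (u *m u^T) 0 0 = \sum_j u 0 j ^+ 2.
Proof. by rewrite mxE; apply: eq_bigr => j _; rewrite mxE expr2. Qed.

Lemma rv_norm_ge0 (R : realType) n (u : 'rV[R]_n) : 0 <= (u *m u^T) 0 0.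
Proof. by rewrite rv_norm sumr_ge0 // => j _; rewrite sqr_ge0. Qed.

Lemma rv_norm_gt0 (R : realType) n (u : 'rV[R]_n) : u != 0 -> 0 < (u *m u^T) 0 0.
Proof.
move=> unz; rewrite lt_def rv_norm_ge0 andbT; apply: contra unz.
rewrite rv_norm => /eqP h; apply/eqP/rowP => j.
have := @psumr_eq0P _ _ xpredT (fun i => u 0 i ^+ 2) (fun i _ => sqr_ge0 (u 0 i)) h j isT.
by rewrite mxE => /eqP; rewrite sqrf_eq0 => /eqP.
Qed.

Lemma householder (R : realType) n (v : 'rV[R]_n.+1) : (v *m v^T) 0 0 = 1 ->
  exists H : 'M[R]_n.+1, H^T = H /\ H *m H = 1%:M /\ row 0 H = v.
Proof.
move=> v1.
pose e : 'rV[R]_n.+1 := delta_mx 0 0.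
have rowE0 p (H : 'M[R]_(n.+1, p)) : row 0 H = e *m H by rewrite rowE.
case: (eqVneq v e) => [-> | ne].
  by exists 1%:M; rewrite trmx1 mulmx1 rowE0 mulmx1.
pose w := e - v.
have wnz : w != 0 by rewrite subr_eq0 eq_sym.
pose c := (w *m w^T) 0 0.
have cgt0 : 0 < c := rv_norm_gt0 wnz.
pose k := 2 / c.
exists (1%:M - k *: (w^T *m w)).
have wwT : w *m w^T = c%:M by apply: mx11_scalar.
split; first by rewrite linearB /= trmx1 linearZ /= trmx_mul trmxK.
split.
  rewrite mulmxBl mul1mx [X in _ - X]mulmxBr mulmx1 -!scalemxAl -!scalemxAr scalerA.
  rewrite !mulmxA -(mulmxA _ w) wwT mul_mx_scalar -scalemxAl scalerA.
  have -> : k * k * c = k + k by rewrite /k; field; rewrite gt_eqF.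
  rewrite scalerDl; set X := k *: _.
  have -> : X - (X + X) = - X by rewrite opprD addrA subrr add0r.
  by rewrite opprK subrK.
rewrite rowE0 mulmxBr mulmx1 -scalemxAr mulmxA.
have ew : (e *m w^T) 0 0 = 1 - v 0 0.
  by rewrite -rowE0 !mxE eqxx.
have ce : c = 2 - 2 * v 0 0.
  have ee : (e *m e^T) 0 0 = 1 by rewrite -rowE0 !mxE eqxx.
  have ev : (e *m v^T) 0 0 = v 0 0 by rewrite -rowE0 !mxE.
  have ve : (v *m e^T) 0 0 = v 0 0 by rewrite trmx_delta -colE !mxE.
  rewrite /c /w linearB /= mulmxBl !mulmxBr.
  rewrite (mx11_scalar (e *m e^T)) (mx11_scalar (e *m v^T)).
  rewrite (mx11_scalar (v *m e^T)) (mx11_scalar (v *m v^T)) ee ev ve v1.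
  rewrite !mxE /=; ring.
have t1 : 1 - v 0 0 != 0.
  have : 0 < 1 - v 0 0 by move: cgt0; rewrite ce => ?; lra.
  by move=> h; rewrite gt_eqF.
rewrite (mx11_scalar (e *m w^T)) ew mul_scalar_mx scalerA.
have -> : k * (1 - v 0 0) = 1 by rewrite /k ce; field; move: t1; apply: contra => /eqP h; apply/eqP; lra.
by rewrite scale1r /w opprB addrC subrK.
Qed.
Lemma real_eigen (R : realType) n (M : 'M[R]_n.+1) : M^T = M ->
  exists a (v : 'rV_n.+1), v != 0 /\ v *m M = a *: v.
Proof.
move=> sM.
pose f := real_complex R.
pose Mc := map_mx f M.
have herm : Mc \is hermsymmx.
  apply: realsym_hermsym.
    apply/is_hermitianmxP; rewrite expr0 scale1r map_mx_id //.
    by rewrite /Mc map_trmx sM.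
  by apply/mxOverP => i j; rewrite mxE; apply/complex_realP; exists (M i j).
have /orthomx_spectralP eqM := hermitian_normalmx herm.
have Dreal := hermitian_spectral_diag_real herm.
set P := spectralmx Mc in eqM.
set D := spectral_diag Mc in eqM Dreal.
have Pu : P \in unitmx by apply: spectral_unit.
pose d := D 0 0.
have dreal : d \is Num.real by apply: (mxOverP Dreal).
pose a := complex.Re d.
have da : f a = d by apply: RRe_real.
have v0M : row 0 P *m Mc = d *: row 0 P.
  rewrite -row_mul eqM !mulmxA mulmxV // mul1mx row_mul.
  by rewrite -row_mul mul_diag_mx; apply/rowP => j; rewrite !mxE.
have v0nz : row 0 P != 0.
  apply/eqP => h.
  have : row 0 (P *m invmx P) = 0 by rewrite row_mul h mul0mx.
  rewrite mulmxV // => /rowP /(_ 0); rewrite !mxE eqxx /=.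
  by move/eqP; rewrite oner_eq0.
have : \det (Mc - d%:M) == 0.
  apply/det0P; exists (row 0 P) => //.
  by rewrite mulmxBr v0M mul_mx_scalar subrr.
have -> : Mc - d%:M = map_mx f (M - a%:M).
  by rewrite -da map_mxB map_scalar_mx.
rewrite det_map_mx fmorph_eq0 => /det0P [v vnz vM].
exists a, v; split => //.
by move: vM; rewrite mulmxBr mul_mx_scalar => /eqP; rewrite subr_eq0 => /eqP.
Qed.

Lemma sym_spectral (R : realType) n (M : 'M[R]_n) : M^T = M ->
  exists (U : 'M[R]_n) (s : 'rV[R]_n), U^T *m U = 1%:M /\ M = U *m diag_mx s *m U^T.
Proof.
elim: n M => [|n IH] M sM.
  by exists 1%:M, 0; split; apply/matrixP => -[].
have [a [u [unz uM]]] := real_eigen sM.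
pose cu := (u *m u^T) 0 0.
have cu0 : 0 < cu := rv_norm_gt0 unz.
pose v := (Num.sqrt cu)^-1 *: u.
have v1 : (v *m v^T) 0 0 = 1.
  rewrite /v linearZ /= -scalemxAl -scalemxAr !mxE -/cu mulrA -expr2 exprVn.
  rewrite sqr_sqrtr ?ltW //.
  have -> : \sum_j u 0 j * u^T j 0 = cu by rewrite /cu mxE.
  by rewrite mulVf // gt_eqF.
have vM : v *m M = a *: v by rewrite /v -scalemxAl uM !scalerA mulrC.
have [H [sH [HH rH]]] := householder v1.
pose B := H *m M *m H.
have sB : B^T = B by rewrite /B !trmx_mul sH sM mulmxA.
have rB : row 0 B = a *: row 0 (1%:M : 'M[R]_n.+1).
  by rewrite /B !row_mul rH vM -scalemxAl -rH -row_mul HH.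
have ur : ursubmx (B : 'M_(1 + n)) = 0.
  apply/matrixP => i j; rewrite [RHS]mxE mxE ord1.
  rewrite mxE.
  have -> : lshift n (0 : 'I_1) = 0 by apply: val_inj.
  transitivity (row 0 B 0 (rshift 1 j)); first by rewrite [RHS]mxE.
  by rewrite rB [LHS]mxE [X in _ * X]mxE [X in _ * X]mxE /= mulr0.
have dl : dlsubmx (B : 'M_(1 + n)) = 0.
  by rewrite -sB -trmx_ursub ur trmx0.
pose M' := drsubmx (B : 'M_(1 + n)).
have sM' : M'^T = M' by rewrite /M' trmx_drsub sB.
have [U' [s' [U'U eM']]] := IH M' sM'.
pose Ub : 'M_(1 + n) := block_mx 1%:M 0 0 U'.
exists (H *m Ub), (row_mx (ulsubmx (B : 'M_(1 + n))) s').
split.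
  rewrite trmx_mul sH mulmxA -(mulmxA Ub^T H H) HH mulmx1 /Ub tr_block_mx !trmx0 trmx1.
  rewrite (mulmx_block (1%:M : 'M[R]_1) 0 0 U'^T 1%:M 0 0 U').
  rewrite !mulmx0 !mul0mx !mulmx1 !addr0 !add0r U'U.
  by symmetry; apply: (scalar_mx_block 1 n).
have eB : B = block_mx (ulsubmx (B : 'M_(1 + n))) 0 0 M'.
  by rewrite -ur -dl /M' submxK.
have eM : M = H *m B *m H.
  by rewrite /B !mulmxA HH mul1mx -mulmxA HH mulmx1.
set ul := ulsubmx (B : 'M_(1 + n)) in eB *.
have dul : diag_mx ul = ul by apply/matrixP => i j; rewrite !ord1 !mxE eqxx mulr1n.
rewrite {1}eM eB eM' (diag_mx_row ul s') dul trmx_mul sH /Ub (tr_block_mx (1%:M : 'M[R]_1)) !trmx0 trmx1.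
rewrite !mulmxA; congr (_ *m H); rewrite -!mulmxA; congr (H *m _).
rewrite (mulmx_block ul 0 0 (diag_mx s') 1%:M 0 0 U'^T).
rewrite ?mulmx0 ?mul0mx ?mulmx1 ?addr0 ?add0r.
have E := mulmx_block (1%:M : 'M[R]_1) (0 : 'M_(1,n)) (0 : 'M_(n,1)) U' ul (0 : 'M_(1,n)) (0 : 'M_(n,1)) (diag_mx s' *m U'^T).
rewrite [RHS]E.
rewrite ?mulmx0 ?mul0mx ?mulmx1 ?mul1mx ?addr0 ?add0r mulmxA.
by [].
Qed.

Lemma mulmxKr (R : realType) k p q (X : 'M[R]_(p, k)) (P : 'M[R]_(q, k))
  (Q : 'M[R]_(k, q)) : Q *m P = 1%:M -> X *m Q *m P = X.
Proof. by move=> QP; rewrite -mulmxA QP mulmx1. Qed.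

Lemma inv_right (R : realType) k (A B : 'M[R]_k) : A *m B = 1%:M -> invmx A = B.
Proof.
move=> AB; have [Au _] := mulmx1_unit AB.
by rewrite -[invmx A]mulmx1 -AB mulmxA mulVmx // mul1mx.
Qed.

Lemma quad_entry (R : realType) m k (X : 'M[R]_m) (P : 'M[R]_(m, k)) i :
  ((col i P)^T *m X *m col i P) 0 0 = (P^T *m X *m P) i i.
Proof.
rewrite !colE trmx_mul trmx_delta !mulmxA -rowE -!row_mul -colE.
by rewrite [LHS]mxE [LHS]mxE.
Qed.

Lemma diag_quad (R : realType) k (s : 'rV[R]_k) (y : 'cV[R]_k) :
  (y^T *m diag_mx s *m y) 0 0 = \sum_i s 0 i * y i 0 ^+ 2.
Proof.
rewrite mul_mx_diag mxE; apply: eq_bigr => i _; rewrite !mxE.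
by rewrite mulrC mulrA expr2 mulrC mulrA.
Qed.

Lemma diag_quad_pos (R : realType) k (s : 'rV[R]_k) (y : 'cV[R]_k) :
  (forall i, 0 < s 0 i) -> y != 0 -> 0 < (y^T *m diag_mx s *m y) 0 0.
Proof.
move=> sp ynz; rewrite diag_quad.
have [i yi] : exists i, y i 0 != 0.
  apply/existsP; apply: contraR ynz; rewrite negb_exists => /forallP h.
  by apply/eqP/matrixP => i j; rewrite ord1 mxE; apply/eqP; have := h i; rewrite negbK.
rewrite (bigD1 i) //= ltr_wpDr //.
  by rewrite sumr_ge0 // => j _; rewrite mulr_ge0 ?sqr_ge0 ?ltW.
by rewrite mulr_gt0 // lt_def sqr_ge0 andbT sqrf_eq0 yi.
Qed.

Lemma diag_inv (R : realType) k (s : 'rV[R]_k) : (forall i, 0 < s 0 i) ->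
  diag_mx s *m diag_mx (\row_i (s 0 i)^-1) = 1%:M /\
  diag_mx (\row_i (s 0 i)^-1) *m diag_mx s = 1%:M.
Proof.
move=> sp; split; apply/matrixP => i j; rewrite mul_diag_mx !mxE;
  case: eqVneq => [->|]; rewrite ?mulr1n ?mulr0n ?mulr0 //.
  by rewrite mulfV // gt_eqF.
by rewrite mulVf // gt_eqF.
Qed.

Theorem lemma1 (R : realType) (n k : nat) (hk : (1 <= k)%N) (hkn : (k < n)%N)
    (tau : R) (htau : 0 < tau) (A : 'M[R]_n) (hA : spd_mx A)
    (W : 'M[R]_(k, n)) (M : 'M[R]_k) :
  in_E A W M <->
  exists (U : 'M[R]_k) (V : 'M[R]_(n, k)) (s : 'rV[R]_k),
    [/\ orthogonal_mx U,
        V^T *m V = 1%:M,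
        (forall i : 'I_k, A *m col i V = s 0 i *: col i V),
        W = U *m diag_mx s *m V^T
      & M = U *m diag_mx s *m U^T].
Proof.
case: hA => sA pdA.
split.
  move=> [[sM pdM] [h1 h2]].
  have Mu : M \in unitmx.
    rewrite unitmxE unitfE; apply/negP => /det0P [v vnz vM].
    have vTnz : v^T != 0 by rewrite trmx_eq0.
    by have := pdM _ vTnz; rewrite trmxK vM mul0mx mxE ltxx.
  have WA : W *m A = M *m W.
    by rewrite -{2}h1 !mulmxA mulmxV // mul1mx.
  rewrite h1 in h2.
  have WW : W *m W^T = M *m M.
    by rewrite -{1}h2 mulmxKV.
  have [U [s [UU eM]]] := sym_spectral sM.
  have UUt : U *m U^T = 1%:M := mulmx1C UU.
  have UMU : U^T *m M *m U = diag_mx s.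
    by rewrite eM !mulmxA UU mul1mx (mulmxKr _ UU).
  have sp : forall i, 0 < s 0 i.
    move=> i; have := UMU; move/matrixP/(_ i i) => e.
    have : diag_mx s i i = s 0 i by rewrite mxE eqxx mulr1n.
    move=> <-; rewrite -e -quad_entry; apply: pdM; apply/eqP => c0.
    have := UU; move/matrixP/(_ i i).
    rewrite -[U^T]mulmx1 -quad_entry c0 mulmx0 [in X in X = _]mxE [in X in _ = X]mxE eqxx /= => /eqP.
    by rewrite eq_sym oner_eq0.
  have [DDi DiD] := diag_inv sp.
  set D := diag_mx s in UMU eM DDi DiD *.
  set Di := diag_mx _ in DDi DiD.
  pose V := W^T *m U *m Di.
  have AWt : A *m W^T = W^T *m M by rewrite -sA -trmx_mul WA trmx_mul sM.
  have AV : A *m V = V *m D.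
    rewrite /V !mulmxA AWt eM !mulmxA (mulmxKr _ UU) (mulmxKr _ DiD).
    by rewrite -!mulmxA DDi mulmx1.
  exists U, V, s; split.
  - by split.
  - rewrite /V !trmx_mul trmxK tr_diag_mx !mulmxA -(mulmxA _ W) WW eM !mulmxA.
    rewrite !(mulmxKr _ UU).
    by rewrite DiD mul1mx DDi.
  - move=> i; rewrite !colE mulmxA AV -mulmxA mul_diag_mx.
    rewrite scalemxAr; congr (_ *m _); apply/matrixP => a b; rewrite !mxE.
    have [->|ne] := eqVneq a i; first by [].
    by rewrite !mulr0.
  - by rewrite /V !trmx_mul trmxK tr_diag_mx !mulmxA (mulmxKr _ DDi) UUt mul1mx.
  - by [].
move=> [U [V [s [[UU UUt] VV Acol eW eM]]]].
have AV : A *m V = V *m diag_mx s.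
  apply/matrixP => r j; rewrite mul_mx_diag [RHS]mxE.
  transitivity ((A *m col j V) r 0); first by rewrite colE mulmxA -colE [RHS]mxE.
  by rewrite Acol !mxE mulrC.
have sp : forall i, 0 < s 0 i.
  move=> i; have e := Acol i.
  have q1 : ((col i V)^T *m col i V) 0 0 = 1.
    by rewrite -[(col i V)^T]mulmx1 quad_entry mulmx1 VV mxE eqxx.
  have nz : col i V != 0.
    apply/eqP => c; move: q1; rewrite c mulmx0 mxE => /eqP.
    by rewrite eq_sym oner_eq0.
  by have := pdA _ nz; rewrite -mulmxA e -scalemxAr mxE q1 mulr1.
have [DDi DiD] := diag_inv sp.
set D := diag_mx s in AV eW eM DDi DiD *.
set Di := diag_mx _ in DDi DiD.
have VtA : V^T *m A = D *m V^T by rewrite -sA -trmx_mul AV trmx_mul tr_diag_mx.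
have Minv : invmx M = U *m Di *m U^T.
  by apply: inv_right; rewrite eM !mulmxA (mulmxKr _ UU) (mulmxKr _ DDi) UUt.
have e1 : invmx M *m W *m A = W.
  by rewrite Minv eW !mulmxA (mulmxKr _ UU) (mulmxKr _ DiD) -mulmxA VtA mulmxA.
split; [split|split => //].
    by rewrite eM !trmx_mul trmxK tr_diag_mx mulmxA.
  move=> x xnz.
  have ynz : U^T *m x != 0.
    by apply: contra xnz => /eqP y0; rewrite -[x]mul1mx -UUt -mulmxA y0 mulmx0.
  by have := diag_quad_pos sp ynz; rewrite trmx_mul trmxK eM !mulmxA.
rewrite e1 Minv eW !trmx_mul trmxK tr_diag_mx eM !mulmxA.
by rewrite (mulmxKr _ VV) (mulmxKr _ UU) (mulmxKr _ DDi).
Qed.
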